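(* Let $H$ be a separable complex Hilbert space, $\{v_j\}_{j\in\mathbb N}$ an orthonormal basis of $H$, and $\{w_j\}_{j\in\mathbb N}$ a set of unit vectors in $H$. For $N\ge1$ define $T_Nf=(\langle f,w_1\rangle,\dots,\langle f,w_N\rangle,\langle f,v_{N+1}\rangle,\langle f,v_{N+2}\rangle,\dots)$ and $T_\infty f=(\langle f,w_n\rangle)_{n\in\mathbb N}$ for $f\in H$, and say $T_N\to T_\infty$ uniformly if $\sup_{\|f\|=1}\|T_Nf-T_\infty f\|_{\ell^2}\to0$ as $N\to\infty$. (a) If $T_N\to T_\infty$ uniformly, then $\lim_{N\to\infty}\|v_N-w_N\|=0$. (b) If $\{\|v_n-w_n\|\}_{n\in\mathbb N}\in\ell^2$, then $T_N\to T_\infty$ uniformly. *)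

(* Defs.v *)
From HB Require Import structures.
From mathcomp Require Import all_boot all_order all_algebra.
From mathcomp Require Import all_classical all_reals all_analysis.
From mathcomp Require Import complex.
Set Implicit Arguments. Unset Strict Implicit. Unset Printing Implicit Defensive.
Import Order.TTheory GRing.Theory Num.Theory numFieldNormedType.Exports.
Local Open Scope ring_scope.
Local Open Scope classical_set_scope.

Section Hilbert.
Variables (R : realType) (H : lmodType R[i]) (ip : H -> H -> R[i]).

Definition is_inner_product : Prop :=
  [/\ forall (a : R[i]) (x y z : H), ip (a *: x + y) z = a * ip x z + ip y z,
      forall x y : H, ip x y = (ip y x)^*,
      forall x : H, 0 <= ip x x
    & forall x : H, ip x x = 0 -> x = 0].

Definition hnorm (x : H) : R := Num.sqrt (complex.Re (ip x x)).

Definition ip_complete : Prop :=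
  forall u : nat -> H,
    (forall e : R, 0 < e -> exists M : nat, forall m n : nat,
        (M <= m)%N -> (M <= n)%N -> hnorm (u m - u n) < e) ->
    exists l : H, (fun n => hnorm (u n - l)) @ \oo --> (0 : R).

Definition orthonormal_basis (v : nat -> H) : Prop :=
  (forall i j : nat, ip (v i) (v j) = (i == j)%:R) /\
  (forall f : H, (forall j, ip f (v j) = 0) -> f = 0).

Definition cabs2 (z : R[i]) : R := (complex.Re z) ^+ 2 + (complex.Im z) ^+ 2.

Definition esqrt (x : \bar R) : \bar R :=
  match x with
  | EFin r => (Num.sqrt r)%:E
  | +oo%E => +oo%E
  | -oo%E => 0%E
  end.

(* Coordinates (0-indexed: coordinate n stands for index n+1 of the paper).
   T_N f has coordinate <f,w_n> for n < N and <f,v_n> for n >= N;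
   T_oo f has coordinate <f,w_n>. *)
Definition T_N (v w : nat -> H) (N : nat) (f : H) (n : nat) : R[i] :=
  if (n < N)%N then ip f (w n) else ip f (v n).
Definition T_inf (w : nat -> H) (f : H) (n : nat) : R[i] := ip f (w n).

Definition dist_l2 (v w : nat -> H) (N : nat) (f : H) : \bar R :=
  esqrt (\sum_(0 <= n <oo) (cabs2 (T_N v w N f n - T_inf w f n))%:E)%E.

Definition unif_conv (v w : nat -> H) : Prop :=
  (fun N => ereal_sup [set dist_l2 v w N f | f in [set f | hnorm f = 1]])
    @ \oo --> 0%E.

End Hilbert.

(* Main.v *)
Require Import Defs.
From HB Require Import structures.
From mathcomp Require Import all_boot all_order all_algebra.
From mathcomp Require Import all_classical all_reals all_analysis.
From mathcomp Require Import complex.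
From mathcomp Require Import ring lra.
Import Order.TTheory GRing.Theory Num.Theory numFieldNormedType.Exports.
Local Open Scope ring_scope.
Local Open Scope classical_set_scope.

Section Alg.
Context {R : realType} {H : lmodType R[i]} {ip : H -> H -> R[i]}.

Lemma ip0l (hip : is_inner_product ip) z : ip 0 z = 0.
Proof.
case: hip => lin _ _ _.
have := lin 1 0 0 z; rewrite scaler0 addr0 mul1r => E.
by move: E; rewrite -{1}[ip 0 z]addr0 => /addrI <-.
Qed.

Lemma ipZl (hip : is_inner_product ip) a x z : ip (a *: x) z = a * ip x z.
Proof.
have h0 := ip0l hip; case: hip => lin _ _ _.
by have := lin a x 0 z; rewrite addr0 h0 addr0.
Qed.

Lemma ipDl (hip : is_inner_product ip) x y z : ip (x + y) z = ip x z + ip y z.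
Proof. by case: hip => lin _ _ _; have := lin 1 x y z; rewrite scale1r mul1r. Qed.

Lemma ipBl (hip : is_inner_product ip) x y z : ip (x - y) z = ip x z - ip y z.
Proof.
by rewrite ipDl // -scaleN1r ipZl // mulN1r.
Qed.

Lemma ipZr (hip : is_inner_product ip) a x z : ip x (a *: z) = a^* * ip x z.
Proof.
have := ipZl hip; case: hip => _ cs _ _ Zl.
by rewrite cs Zl rmorphM /= -cs.
Qed.

Lemma ipBr (hip : is_inner_product ip) x y z : ip x (y - z) = ip x y - ip x z.
Proof.
have := ipBl hip; case: hip => _ cs _ _ Bl.
by rewrite cs Bl rmorphB /= -!cs.
Qed.

Lemma ip0r (hip : is_inner_product ip) z : ip z 0 = 0.
Proof. by rewrite -(subrr z) ipBr // subrr. Qed.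

Lemma CS (hip : is_inner_product ip) f g :
  `|ip f g| ^+ 2 <= ip f f * ip g g.
Proof.
have [->|gn0] := eqVneq g 0.
  by rewrite ip0r // ip0r // normr0 expr0n mulr0.
have cs : forall x y, ip x y = (ip y x)^* by case: hip.
have pos : forall x, 0 <= ip x x by case: hip.
have def : forall x, ip x x = 0 -> x = 0 by case: hip.
set c := ip f g; set b := ip g g; set a := ip f f.
have bn0 : b != 0 by apply/eqP => /def; apply/eqP.
have bgt0 : 0 < b by rewrite lt_def bn0 pos.
set t := c / b.
have := pos (f - t *: g).
rewrite ipBl // !ipBr // !ipZl // !ipZr // -/a -/b -/c.
rewrite [ip g f]cs -/c.
have -> : t^* = c^* / b by rewrite /t rmorphM /= fmorphV /= (geC0_conj (ltW bgt0)).
have -> : a - c^* / b * c - (t * c^* - t * (c^* / b * b)) = a - c * c^* / b.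
  rewrite /t; field; exact: bn0.
rewrite -normCK subr_ge0 ler_pdivrMr //.
Qed.

Local Open Scope complex_scope.
Lemma ipRe (hip : is_inner_product ip) x : ip x x = (complex.Re (ip x x))%:C.
Proof.
have : 0 <= ip x x by case: hip.
case: (ip x x) => a b; rewrite lecE /= => /andP[/eqP -> _] //.
Qed.

Lemma hnorm_sq (hip : is_inner_product ip) x : hnorm ip x ^+ 2 = complex.Re (ip x x).
Proof.
rewrite /hnorm sqr_sqrtr //.
have : 0 <= ip x x by case: hip.
by rewrite lecE => /andP[].
Qed.

Lemma hnorm_ge0 (ip0 : H -> H -> R[i]) x : 0 <= hnorm ip0 x.
Proof. exact: sqrtr_ge0. Qed.

Lemma cabs2_ge0 (z : R[i]) : 0 <= cabs2 z.
Proof. by rewrite /cabs2 addr_ge0 // sqr_ge0. Qed.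

Lemma cabs2_norm (z : R[i]) : `|z| ^+ 2 = (cabs2 z)%:C.
Proof.
by rewrite normc_def -rmorphXn /= sqr_sqrtr // cabs2_ge0.
Qed.

Lemma CSR (hip : is_inner_product ip) f g :
  cabs2 (ip f g) <= hnorm ip f ^+ 2 * hnorm ip g ^+ 2.
Proof.
have := CS hip f g.
by rewrite cabs2_norm (ipRe hip f) (ipRe hip g) -rmorphM lecR !hnorm_sq.
Qed.

End Alg.
Lemma esqrt_ge0 (R : realType) (x : \bar R) : (0 <= esqrt x)%E.
Proof. by case: x => [r||] //=; rewrite lee_fin sqrtr_ge0. Qed.

Lemma esqrt_le (R : realType) (x y : \bar R) :
  (0 <= x)%E -> (x <= y)%E -> (esqrt x <= esqrt y)%E.
Proof.
case: x => [r||]; case: y => [s||] //=; rewrite ?lee_fin => r0 rs.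
- by rewrite ler_sqrt // (le_trans r0 rs).
- exact: leey.
Qed.

Lemma Tdiff (R : realType) (H : lmodType R[i]) (ip : H -> H -> R[i])
  (hip : is_inner_product ip) v w N f n :
  T_N ip v w N f n - T_inf ip w f n = if (n < N)%N then 0 else ip f (v n - w n).
Proof.
rewrite /T_N /T_inf; case: ifP => _; first by rewrite subrr.
by rewrite ipBr.
Qed.
Lemma partA (R : realType) (H : lmodType R[i]) (ip : H -> H -> R[i])
  (v w : nat -> H) :
  is_inner_product ip -> 
  (forall j : nat, hnorm ip (w j) = 1) ->
  forall N, ((hnorm ip (v N - w N))%:E <=
    ereal_sup [set dist_l2 ip v w N f | f in [set f | hnorm ip f = 1%R]])%E.
Proof.
move=> hip wn N.
set S := [set _ | _ in _].
set r := hnorm ip (v N - w N).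
have [r0|rn0] := eqVneq r 0.
  rewrite r0; apply: le_trans (ereal_sup_ubound (ex_intro2 _ _ (w 0%N) (wn 0%N) erefl)).
  exact: esqrt_ge0.
have rgt0 : 0 < r by rewrite lt_def rn0 hnorm_ge0.
set d := v N - w N.
have dd : ip d d = (r ^+ 2)%:C%C by rewrite (ipRe hip) -hnorm_sq.
set f := (r^-1)%:C%C *: d.
have ipfd : ip f d = r%:C%C.
  rewrite ipZl // dd -rmorphM /=; congr (_%:C)%C.
  by rewrite expr2 mulrA mulVf // mul1r.
have hf : hnorm ip f = 1.
  have : hnorm ip f ^+ 2 = 1.
    rewrite hnorm_sq // ipZr // ipfd geC0_conj; last by rewrite ler0c invr_ge0 ltW.
    by rewrite -rmorphM /= mulVf.
  move/eqP; rewrite sqrf_eq1 => /orP[/eqP //|/eqP h].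
  by have := hnorm_ge0 ip f; rewrite h ler0N1.
apply: le_trans (ereal_sup_ubound (ex_intro2 _ _ f hf erefl)).
rewrite /dist_l2.
have -> : r%:E = esqrt ((cabs2 (T_N ip v w N f N - T_inf ip w f N))%:E).
  rewrite Tdiff // ltnn -/d ipfd /= /cabs2 /= expr0n /= addr0 sqrtr_sqr.
  by rewrite ger0_norm // ltW.
apply: esqrt_le; first by rewrite lee_fin cabs2_ge0.
rewrite (@nneseriesD1 R _ N xpredT) //; last by move=> k _; rewrite lee_fin cabs2_ge0.
by rewrite leeDl // nneseries_ge0 // => k _ _; rewrite lee_fin cabs2_ge0.
Qed.
Lemma partB (R : realType) (H : lmodType R[i]) (ip : H -> H -> R[i])
  (v w : nat -> H) :
  is_inner_product ip -> forall N f, hnorm ip f = 1 ->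
  (dist_l2 ip v w N f <=
    esqrt (\sum_(N <= k <oo) ((hnorm ip (v k - w k)) ^+ 2)%:E))%E.
Proof.
move=> hip N f hf.
apply: esqrt_le; first by apply: nneseries_ge0 => k _ _; rewrite lee_fin cabs2_ge0.
rewrite [X in (_ <= X)%E]eseries_cond [X in (_ <= X)%E]eseries_mkcondr.
apply: (@lee_nneseries R _ _ xpredT) => [k _ _|k _]; first by rewrite lee_fin cabs2_ge0.
rewrite Tdiff //; case: ltnP => _ /=.
  by rewrite /cabs2 /= expr0n /= addr0.
rewrite lee_fin; apply: le_trans (CSR hip _ _) _.
by rewrite hf expr1n mul1r.
Qed.

Lemma esqrt_cvg0 (R : realType) (t : nat -> \bar R) :
  t @ \oo --> 0%E -> (fun N => esqrt (t N)) @ \oo --> 0%E.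
Proof.
move/fine_cvgP => [tfin tc]; apply/fine_cvgP; split.
  by apply: filterS tfin => n; case: (t n).
have h : (Num.sqrt \o (fine \o t)) @ \oo --> 0.
  apply: cvg_comp tc _.
  by have := @sqrt_continuous R 0; rewrite /continuous_at sqrtr0; apply.
apply: cvg_trans h; apply: near_eq_cvg; apply: filterS tfin => n.
by rewrite /=; case: (t n).
Qed.

Theorem mainTheorem7 (R : realType) (H : lmodType R[i]) (ip : H -> H -> R[i])
  (v w : nat -> H) :
  is_inner_product ip -> ip_complete ip ->
  orthonormal_basis ip v ->
  (forall j : nat, hnorm ip (w j) = 1) ->
  (unif_conv ip v w ->
     (fun N => hnorm ip (v N - w N)) @ \oo --> (0 : R)) /\
  ((\sum_(0 <= n <oo) ((hnorm ip (v n - w n)) ^+ 2)%:E < +oo)%E ->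
     unif_conv ip v w).
Proof.
move=> hip _ _ wn; split.
  move=> /fine_cvgP[sfin sc].
  apply: squeeze_cvgr; [|exact: cvg_cst|exact: sc].
  apply: filterS sfin => N /= fin.
  rewrite hnorm_ge0 /= -lee_fin fineK //; exact: partA.
move=> hS; rewrite /unif_conv.
have ht := @nneseries_tail_cvg R (fun n => (hnorm ip (v n - w n) ^+ 2)%:E) xpredT hS
  (fun k _ => (eq_ind_r is_true (sqr_ge0 _) (lee_fin _ _))).
apply: (@squeeze_cvge _ _ _ _ (cst 0%E) _
  (fun N => esqrt (\sum_(N <= k <oo) (hnorm ip (v k - w k) ^+ 2)%:E)%E)); last 2 first.
- exact: cvg_cst.
- apply: esqrt_cvg0; exact ht.
apply: nearW => N; apply/andP; split.
  apply: le_trans (ereal_sup_ubound (ex_intro2 _ _ (w 0%N) (wn 0%N) erefl)).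
  exact: esqrt_ge0.
by apply: ge_ereal_sup => _ [f hf <-]; exact: partB.
Qed.
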